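(* In the setting described in the context, define $\mathbf E\in\mathbb{R}^{n\times n}$ by $[\mathbf E]_{ij}=\frac1{2n_{s(i)}}\big([\boldsymbol\beta^{r(i)}_1(x_i)]_j-[\boldsymbol\beta^{r(i)}_0(x_i)]_j\big)$ for $j\ne i$ and $[\mathbf E]_{ii}=0$, and define $\mathbf C\in\mathbb{R}^{n\times n}$ by $[\mathbf C]_{ii}=\frac1{2n_{s(i)}}\big(\frac{a_i}{w_i}-\frac{1-a_i}{1-w_i}\big)$ and, for $j\ne i$, $[\mathbf C]_{ij}=\frac1{2n_{s(i)}}\big[(1-\frac{a_i}{w_i})[\boldsymbol\beta^{r(i)}_1(x_i)]_j+(\frac{1-a_i}{1-w_i}-1)[\boldsymbol\beta^{r(i)}_0(x_i)]_j\big]$. Then the cross-fitted plug-in estimator satisfies $\psi_n=\sum_{i,j\in[n]}[\mathbf E]_{ij}\Lambda_{x_i,y_j}$ and the cross-fitted one-step estimator satisfies $\bar\psi_n=\sum_{i,j\in[n]}[\mathbf C]_{ij}\Lambda_{x_i,y_j}$.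
   Context: $k,\ell$ kernels on $\mathcal{X},\mathcal{Y}$ with feature maps $K_x,L_y$; $\mathcal{H}$ the tensor-product RKHS with feature map $\Lambda_{x,y}=K_x\otimes L_y$. Data $z_i=(x_i,a_i,y_i)\in\mathcal{X}\times\{0,1\}\times\mathcal{Y}$, $i\in[n]$; $[n]$ is partitioned into folds $\mathcal{I}^1,\mathcal{I}^2$ of sizes $n_1,n_2$; $s(i)$ is the fold containing $i$ and $r(i)=3-s(i)$. For $r\in\{1,2\}$: propensity estimates $\pi^r_n:\mathcal{X}\to(0,1)$ and outcome models $\theta^r_{n,a}(x)=\sum_j[\boldsymbol\beta^r_a(x)]_j\Lambda_{x,y_j}$, $a\in\{0,1\}$, with $\boldsymbol\beta^r_a(x)\in\mathbb{R}^n$ and $[\boldsymbol\beta^r_a(x)]_j=0$ whenever $j\notin\mathcal{I}^r$ or $a_j\ne a$. $w_i=\pi_n^{r(i)}(x_i)$. With $s=3-r$ and $P_n^s$ the empirical distribution of $\{z_i:i\in\mathcal{I}^s\}$: the fold plug-in is $\psi^r_n=\mathbb{E}_{P_n^s}[\theta^r_{n,1}(X)-\theta^r_{n,0}(X)]$, the cross-fitted plug-in is $\psi_n=\frac12\sum_{r=1}^2\psi^r_n$; $\phi^r_n(x,a,y)=(\frac{a}{\pi^r_n(x)}-\frac{1-a}{1-\pi^r_n(x)})(\Lambda_{x,y}-\theta^r_{n,a}(x))+\theta^r_{n,1}(x)-\theta^r_{n,0}(x)-\psi^r_n$, and the cross-fitted one-step estimator is $\bar\psi_n=\frac12\sum_{r=1}^2(\psi^r_n+\mathbb{E}_{P_n^s}[\phi^r_n(Z)])$.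 *)

(* Defs.v *)
From HB Require Import structures.
From mathcomp Require Import all_boot all_order all_algebra.
Set Implicit Arguments. Unset Strict Implicit. Unset Printing Implicit Defensive.
Import Order.TTheory GRing.Theory Num.Theory.
Local Open Scope ring_scope.

(* Conventions:
   - folds are labelled by bool: [true] = I^1, [false] = I^2;
     [s i] is the fold containing i, and the "other" fold r(i) is [~~ s i].
   - H is an abstract R-module (the tensor-product RKHS is a special case);
     Lam x y plays the role of the feature map Lambda_{x,y}.
   - treatments a_i are booleans, cast to R as (a i)%:R.
   - beta r b z : 'I_n -> R is the coefficient vector beta^r_b(z). *)

Section CrossFit.
Variables (R : realFieldType) (H : lmodType R) (X Y : Type) (n : nat).
Variables (Lam : X -> Y -> H) (x : 'I_n -> X) (a : 'I_n -> bool)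
  (y : 'I_n -> Y) (s : 'I_n -> bool) (pi : bool -> X -> R)
  (beta : bool -> bool -> X -> 'I_n -> R).

Definition nfold (r : bool) : nat := #|[set i | s i == r]|.

Definition theta (r b : bool) (z : X) : H :=
  \sum_(j < n) beta r b z j *: Lam z (y j).

Definition Pn (r : bool) (f : 'I_n -> H) : H :=
  (nfold r)%:R^-1 *: \sum_(i < n | s i == r) f i.

Definition psi_fold (r : bool) : H :=
  Pn (~~ r) (fun i => theta r true (x i) - theta r false (x i)).

Definition psi_cf : H := 2^-1 *: (psi_fold true + psi_fold false).

Definition ipw (r b : bool) (z : X) : R :=
  b%:R / pi r z - (1 - b%:R) / (1 - pi r z).

Definition phi (r : bool) (z : X) (b : bool) (v : Y) : H :=
  ipw r b z *: (Lam z v - theta r b z)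
  + theta r true z - theta r false z - psi_fold r.

Definition psi_os : H :=
  2^-1 *: ((psi_fold true + Pn false (fun i => phi true (x i) (a i) (y i)))
         + (psi_fold false + Pn true (fun i => phi false (x i) (a i) (y i)))).

Definition wt (i : 'I_n) : R := pi (~~ s i) (x i).

Definition Emx : 'M[R]_n := \matrix_(i, j)
  if i == j then 0 else
  (2 * (nfold (s i))%:R)^-1 *
    (beta (~~ s i) true (x i) j - beta (~~ s i) false (x i) j).

Definition Cmx : 'M[R]_n := \matrix_(i, j)
  if i == j then
    (2 * (nfold (s i))%:R)^-1 *
      ((a i)%:R / wt i - (1 - (a i)%:R) / (1 - wt i))
  else
    (2 * (nfold (s i))%:R)^-1 *
      ((1 - (a i)%:R / wt i) * beta (~~ s i) true (x i) j
       + ((1 - (a i)%:R) / (1 - wt i) - 1) * beta (~~ s i) false (x i) j).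

End CrossFit.

(* Main.v *)
Require Import Defs.
From HB Require Import structures.
From mathcomp Require Import all_boot all_order all_algebra.
From mathcomp Require Import ring.
Import Order.TTheory GRing.Theory Num.Theory.
Local Open Scope ring_scope.

Section H.
Variables (R : realFieldType) (H : lmodType R) (X Y : Type) (n : nat)
  (Lam : X -> Y -> H) (x : 'I_n -> X) (a : 'I_n -> bool) (y : 'I_n -> Y)
  (s : 'I_n -> bool) (pi : bool -> X -> R)
  (beta : bool -> bool -> X -> 'I_n -> R).

Lemma PnE r (f : 'I_n -> H) :
  Pn s r f = \sum_i (if s i == r then (nfold s r)%:R^-1 *: f i else 0).
Proof. by rewrite /Pn scaler_sumr big_mkcond. Qed.

Lemma PnB r (f : 'I_n -> H) v : (0 < nfold s r)%N ->
  Pn s r (fun i => f i - v) = Pn s r f - v.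
Proof.
move=> hn; rewrite /Pn sumrB scalerBr; congr (_ - _).
have -> : \sum_(i < n | s i == r) v = \sum_(i in [set i | s i == r]) v.
  by apply: eq_bigl => i; rewrite inE.
rewrite sumr_const -/(nfold s r) -scaler_nat scalerA mulVf ?scale1r //.
by rewrite pnatr_eq0 -lt0n.
Qed.

Definition cc (i : 'I_n) : R := (2 * (nfold s (s i))%:R)^-1.

Lemma combine (F : bool -> 'I_n -> H) :
  2^-1 *: (Pn s false (F true) + Pn s true (F false)) =
  \sum_i cc i *: F (~~ s i) i.
Proof.
rewrite !PnE -big_split scaler_sumr; apply: eq_bigr => i _ /=.
rewrite /cc invfM -scalerA; case: (s i) => /=; by rewrite ?add0r ?addr0.
Qed.

Lemma sum_diag (i : 'I_n) (c d : R) (K : 'I_n -> R) (L : 'I_n -> H) :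
  K i = 0 ->
  \sum_j (if i == j then c * d else c * K j) *: L j =
  c *: (d *: L i + \sum_j K j *: L j).
Proof.
move=> HK; rewrite (bigD1 i) //= eqxx (bigD1 i (P:=predT)) //= HK scale0r add0r.
rewrite scalerDr scalerA; congr (_ + _); rewrite scaler_sumr.
apply: eq_bigr => j /negbTE; rewrite eq_sym => ->; by rewrite scalerA.
Qed.

End H.

Theorem lemmaH1 (R : realFieldType) (H : lmodType R) (X Y : Type) (n : nat)
  (Lam : X -> Y -> H) (x : 'I_n -> X) (a : 'I_n -> bool) (y : 'I_n -> Y)
  (s : 'I_n -> bool) (pi : bool -> X -> R)
  (beta : bool -> bool -> X -> 'I_n -> R)
  (Hn : forall r : bool, (0 < nfold s r)%N)
  (Hpi : forall (r : bool) (z : X), 0 < pi r z < 1)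
  (Hbeta : forall (r b : bool) (z : X) (j : 'I_n),
      (s j != r) || (a j != b) -> beta r b z j = 0) :
  psi_cf Lam x y s beta =
    \sum_(i < n) \sum_(j < n) Emx x s beta i j *: Lam (x i) (y j)
  /\
  psi_os Lam x a y s pi beta =
    \sum_(i < n) \sum_(j < n) Cmx x a s pi beta i j *: Lam (x i) (y j).
Proof.
have hb : forall b z i, beta (~~ s i) b z i = 0.
  by move=> b z i; apply: Hbeta; case: (s i).
split.
  rewrite /psi_cf /psi_fold.
  rewrite (@combine _ _ _ s (fun r i => theta Lam y beta r true (x i) - theta Lam y beta r false (x i))).
  apply: eq_bigr => i _.
  rewrite /theta -sumrB scaler_sumr; apply: eq_bigr => j _.
  rewrite mxE -scalerBl scalerA /cc.
  case: eqP => [<-|_] //; by rewrite !hb subrr mulr0 scale0r.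
rewrite /psi_os /phi !PnB //; rewrite ?Hn ![psi_fold _ _ _ _ _ _ + _]addrC !subrK.
rewrite (@combine _ _ _ s (fun r i => ipw pi r (a i) (x i) *: (Lam (x i) (y i) - theta Lam y beta r (a i) (x i)) + theta Lam y beta r true (x i) - theta Lam y beta r false (x i))).
apply: eq_bigr => i _.
under eq_bigr do rewrite mxE.
rewrite (@sum_diag _ _ _ i _ (ipw pi (~~ s i) (a i) (x i))); last by rewrite !hb !mulr0 addr0.
congr (_ *: _).
rewrite /theta scalerBr -!addrA; congr (_ + _).
rewrite addrC -!sumrB scaler_sumr -sumrN -!big_split /=.
apply: eq_bigr => j _.
rewrite !scalerA -!scalerBl; congr (_ *: _).
rewrite /ipw /wt; case: (a i) => /=; ring.
Qed.
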